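(* (1) For integers $n\ge0$, $0\le l<q^n$ and arbitrary $k\ge0$, $$\sum_{m\in\mathbf{F}_q[T],\ \deg m<n}D_k(m)D'_l(m)=\begin{cases}0&\text{if }k+l\neq q^n-1,\\(-1)^n&\text{if }k+l=q^n-1,\end{cases}$$ the sum running over all polynomials of degree $<n$ (including $0$). (2) For $0\le l<q^n$ and $0\le k<q^n$, $$\sum_{m\ \text{monic},\ \deg m=n}D_k(m)D'_l(m)=\begin{cases}0&\text{if }k+l\neq q^n-1,\\(-1)^n&\text{if }k+l=q^n-1.\end{cases}$$
   Context: Let $q$ be a prime power and $\mathbf{F}_q[T]\subset O=\mathbf{F}_q[[T]]$. Hasse derivatives: $\mathcal{D}_n(\sum_ia_iT^i)=\sum_i\binom{i}{n}a_iT^{i-n}$ (binomial coefficients read in $\mathbf{F}_q$). For $j\ge0$ with base-$q$ expansion $j=\alpha_0+\alpha_1q+\cdots+\alpha_sq^s$ ($0\le\alpha_i<q$): $D_j(x)=\prod_{n=0}^s\mathcal{D}_n(x)^{\alpha_n}$ ($D_0=1$), and $D'_j(x)=\prod_{n=0}^sD'_{\alpha_nq^n}(x)$ where $D'_{\alpha q^n}(x)=\mathcal{D}_n(x)^\alpha$ if $0\le\alpha<q-1$ and $D'_{(q-1)q^n}(x)=\mathcal{D}_n(x)^{q-1}-1$. *)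

(* Defs.v *)
From HB Require Import structures.
From mathcomp Require Import all_boot all_order all_algebra.
Set Implicit Arguments. Unset Strict Implicit. Unset Printing Implicit Defensive.
Import GRing.Theory.
Local Open Scope ring_scope.

Section HasseDigits.
Variable F : finFieldType.

(* Hasse derivative calD_n: sum_i binom(i,n) a_i T^(i-n), binomials read in F.
   This is exactly mathcomp's nderivn (p^`N(n)). *)
Definition hasse (n : nat) (p : {poly F}) : {poly F} := nderivn n p.

Definition qdigit (j i : nat) : nat := ((j %/ (#|F| ^ i)) %% #|F|)%N.

(* D_j(x) = prod_i calD_i(x)^(alpha_i); digits beyond index j are 0 since q >= 2. *)
Definition Dj (j : nat) (x : {poly F}) : {poly F} :=
  \prod_(i < j.+1) (hasse i x) ^+ (qdigit j i).

(* D'_j(x) = prod_i D'_{alpha_i q^i}(x). *)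
Definition D'j (j : nat) (x : {poly F}) : {poly F} :=
  \prod_(i < j.+1)
    (if qdigit j i == (#|F|.-1)%N then (hasse i x) ^+ (#|F|.-1) - 1
     else (hasse i x) ^+ (qdigit j i)).

(* The polynomial sum_{i<n} c_i T^i (enumerates polynomials of degree < n). *)
Definition polyOf (n : nat) (c : {ffun 'I_n -> F}) : {poly F} := \sum_(i < n) c i *: 'X^i.
End HasseDigits.

(* Main.v *)
Require Import Defs.
From HB Require Import structures.
From mathcomp Require Import all_boot all_order all_algebra all_field zify ring.
Set Implicit Arguments. Unset Strict Implicit. Unset Printing Implicit Defensive.
Import GRing.Theory.
Lemma arith q Q k0 k1 l0 l1 : 1 < q -> k0 < q -> l0 < q -> k1 < Q -> l1 < Q ->
  (k1 * q + k0 + (l1 * q + l0) == q * Q - 1) = (k0 + l0 == q.-1) && (k1 + l1 == Q - 1).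
Proof.
move=> q1 hk hl hk1 hl1; rewrite [q * Q]mulnC.
have E' : k1 * q + k0 + (l1 * q + l0) = (k1 + l1) * q + (k0 + l0) by rewrite mulnDl; lia.
have hs : k0 + l0 <= q + q - 2 by lia.
rewrite E'; move: (k1 + l1) (k0 + l0) hs => s1 s0 hs0.
have Q0 : 0 < Q by lia.
clear hk1 hl1.
apply/eqP/andP.
  move=> E.
  have [hs|hs] := leqP Q s1.
    have := leq_mul hs (leqnn q); lia.
  have [hs2|hs2] := leqP (s1.+2) Q.
    have := leq_mul hs2 (leqnn q); rewrite !mulSn; lia.
  have eQ : Q = s1.+1 by lia.
  subst Q; move: E; rewrite mulSn; split; apply/eqP; lia.
case=> /eqP h1 /eqP h2.
rewrite h1; move: Q0 h2; case: Q => // Q' _ h2.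
have -> : s1 = Q' by lia.
rewrite mulSn; lia.
Qed.


Local Open Scope ring_scope.

Section Aux.
Variable F : finFieldType.
Definition qF := #|F|.
Local Notation q := qF.

Lemma q_gt1 : (1 < q)%N. Proof. exact: finNzRing_gt1. Qed.

Lemma q_pow : exists p n, [/\ p \in [pchar F], q = (p ^ n.+1)%N & prime p].
Proof.
have [p pr cp] := finPcharP F.
have E : q = (p ^ logn p q)%N by exact: (card_pprimeChar cp).
move: E; case: (logn p q) => [|n] E.
  by have := q_gt1; rewrite E.
by exists p, n.
Qed.

Lemma q_pchar : [pchar {poly F}].-nat q.
Proof.
have [p [n [cp -> pr]]] := q_pow.
have cp' : p \in [pchar {poly F}] by rewrite pchar_poly.
by rewrite (eq_pnat _ (pcharf_eq cp')) pnatX pnat_id.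
Qed.

Lemma qR0 : q%:R = 0 :> F.
Proof.
have [p [n [cp -> pr]]] := q_pow.
by rewrite natrX (pcharf0 cp) expr0n.
Qed.

Lemma frobP (a b : {poly F}) : (a + b) ^+ q = a ^+ q + b ^+ q.
Proof. exact: exprDn_pchar q_pchar. Qed.

Lemma frobC (x : F) : (x%:P) ^+ q = x%:P.
Proof. by rewrite -rmorphXn /= expf_card. Qed.

Lemma expf_qm1 (x : F) : x != 0 -> x ^+ q.-1 = 1.
Proof.
move=> nx; apply: (mulIf nx); rewrite mul1r -exprSr prednK ?expf_card //.
exact: ltn_trans q_gt1.
Qed.

Definition Psum (j : nat) : F := \sum_(x : F) x ^+ j.

Lemma Psum_small j : (j < q.-1)%N -> Psum j = 0.
Proof.
move=> hj; case: j hj => [|j] hj.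
  by rewrite /Psum (eq_bigr (fun _ => 1)) ?sumr_const ?card_ord ?qR0 // => x _; rewrite expr0.
have /existsP [a /andP [na ha]] : [exists a : F, (a != 0) && (a ^+ j.+1 != 1)].
  apply: contraT => H.
  have Hr : all (root ('X^(j.+1) - 1)) (enum (predC1 (0 : F))).
    apply/allP => x; rewrite mem_enum /= => nx.
    rewrite rootE !hornerE subr_eq0.
    apply: contraT => hx; rewrite -(negbTE H); apply/existsP; exists x.
    by rewrite hx andbT; exact: nx.
  have nz : 'X^(j.+1) - 1 != 0 :> {poly F}.
    by rewrite -size_poly_eq0 size_polyDl ?size_polyXn ?size_polyN ?size_poly1.
  have := max_poly_roots nz Hr (enum_uniq _).
  rewrite -cardE cardC1 size_polyDl ?size_polyXn ?size_polyN ?size_poly1 //.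
  by rewrite ltnNge hj.
have E : Psum j.+1 = a ^+ j.+1 * Psum j.+1.
  rewrite /Psum mulr_sumr (reindex_inj (mulfI na)) /=.
  by apply: eq_bigr => x _; rewrite exprMn.
apply/eqP; move/eqP: E; rewrite -subr_eq0 -{1}(mul1r (Psum _)) -mulrBl mulf_eq0 subr_eq0 eq_sym.
by rewrite (negbTE ha).
Qed.


Lemma Psum_qm1 : Psum q.-1 = -1.
Proof.
rewrite /Psum (bigD1 0) //= expr0n.
have -> : (q.-1 == 0)%N = false by rewrite -(subn1) subn_eq0 leqNgt q_gt1.
rewrite add0r (eq_bigr (fun _ => 1)); last by move=> x nx; rewrite expf_qm1.
rewrite sumr_const.
have -> : #|[pred i : F | i != 0]| = q.-1 by rewrite -(cardC1 (0 : F)); apply: eq_card.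
apply/eqP; rewrite -addr_eq0 -mulrSr prednK ?qR0 //; exact: ltnW q_gt1.
Qed.

Definition SS (e : nat) (r : {poly F}) := \sum_(x : F) (x%:P + r) ^+ e.

Lemma SS_small e r : (e <= q.-1)%N -> SS e r = (Psum e)%:P.
Proof.
move=> he; rewrite /SS.
rewrite (eq_bigr (fun x => \sum_(i < e.+1) ((x%:P) ^+ (e - i) * r ^+ i) *+ 'C(e, i))); last first.
  by move=> x _; rewrite exprDn.
rewrite exchange_big big_ord_recl /= [X in _ + X]big1 ?addr0.
  rewrite (eq_bigr (fun x => (x ^+ e)%:P)); first by rewrite /Psum rmorph_sum.
  by move=> x _; rewrite subn0 bin0 mulr1n expr0 mulr1 rmorphXn.
move=> i _.
rewrite (eq_bigr (fun x : F => ((x ^+ (e - bump 0 i))%:P * r ^+ bump 0 i) *+ 'C(e, bump 0 i))); last first.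
  by move=> x _; rewrite rmorphXn.
rewrite sumrMnl -mulr_suml -rmorph_sum /= -/(Psum _) Psum_small ?mul0r ?mul0rn //.
apply: (leq_trans _ he); rewrite /bump leq0n add1n; have := ltn_ord i; lia.
Qed.

Lemma q1_gt0 : (0 < q.-1)%N.
Proof. have := q_gt1; lia. Qed.

Ltac qlia := lia.
Ltac clr := repeat (case: eqP => ? /=); try done; try (exfalso; qlia).

Lemma SS_val e r : (e <= (q.-1).*2)%N ->
  SS e r = if (e == q.-1) || (e == (q.-1).*2) then -1 else 0.
Proof.
move=> he2; have q1 := q1_gt0; have q2 := q_gt1; have qq := prednK (ltnW q2).
case: (leqP e q.-1) => he.
  rewrite SS_small //; have [E|ne] := eqVneq e q.-1.
    by rewrite E Psum_qm1 rmorphN1.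
  have hl : (e < q.-1)%N by rewrite ltn_neqAle ne he.
  rewrite (Psum_small hl) rmorph0; clr.
have [f ef] : exists f, e = (q + f)%N by exists (e - q)%N; qlia.

have -> : SS e r = SS f.+1 r + (r ^+ q - r) * SS f r.
  rewrite /SS mulr_sumr -big_split; apply: eq_bigr => x _.
  rewrite ef exprD frobP frobC exprS /= -mulrDl; congr (_ * _); ring.
rewrite (SS_small r (e := f.+1)); last qlia.
rewrite (SS_small r (e := f)); last qlia.
rewrite (Psum_small (j := f)); last qlia.
rewrite rmorph0 mulr0 addr0.
have [hf|hf] := eqVneq f.+1 q.-1.
  by rewrite hf Psum_qm1 rmorphN1; clr.
by rewrite Psum_small ?rmorph0; [clr|qlia].
Qed.

Definition hfun (a b : nat) (x : {poly F}) :=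
  x ^+ a * (if b == q.-1 then x ^+ q.-1 - 1 else x ^+ b).

Lemma hfun_sum a b r : (a < q)%N -> (b < q)%N ->
  \sum_(x : F) hfun a b (x%:P + r) = if (a + b == q.-1)%N then -1 else 0.
Proof.
move=> ha hb; have q1 := q1_gt0; have q2 := q_gt1; have qq := prednK (ltnW q2); rewrite /hfun.
have [eb|nb] := eqVneq b q.-1.
  rewrite (eq_bigr (fun x => (x%:P + r) ^+ (a + q.-1) - (x%:P + r) ^+ a)); last first.
    by move=> x _; rewrite mulrBr mulr1 exprD.
  rewrite sumrB -/(SS _ _) -/(SS _ _) !SS_val; try qlia.
  clr; by rewrite ?subr0 ?subrr ?sub0r.
rewrite (eq_bigr (fun x => (x%:P + r) ^+ (a + b))); last first.
  by move=> x _; rewrite exprD.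
rewrite -/(SS _ _) SS_val; last qlia.
by clr.
Qed.

Lemma iter_sum n (h : nat -> {poly F} -> {poly F}) (s : nat -> {poly F})
  (G : {ffun 'I_n -> F} -> 'I_n -> {poly F}) :
  (forall j r, \sum_(x : F) h j (x%:P + r) = s j) ->
  (forall (c c' : {ffun 'I_n -> F}) (j : 'I_n),
     (forall i : 'I_n, (j < i)%N -> c i = c' i) ->
     G c j - (c j)%:P = G c' j - (c' j)%:P) ->
  \sum_(c : {ffun 'I_n -> F}) \prod_(j < n) h j (G c j) = \prod_(j < n) s j.
Proof.
elim: n h s G => [|n IH] h s G Hs HG.
  rewrite big_ord0 (eq_bigr (fun _ => 1)); last by move=> c _; rewrite big_ord0.
  by rewrite sumr_const card_ffun card_ord expn0.
pose fc (p : F * {ffun 'I_n -> F}) : {ffun 'I_n.+1 -> F} :=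
  [ffun i => if unlift ord0 i is Some j then p.2 j else p.1].
pose fd (c : {ffun 'I_n.+1 -> F}) : F * {ffun 'I_n -> F} :=
  (c ord0, [ffun j => c (lift ord0 j)]).
have K1 : cancel fc fd.
  case=> x c'; rewrite /fd /fc; congr (_, _); first by rewrite ffunE unlift_none.
  by apply/ffunP => j; rewrite !ffunE liftK.
have K2 : cancel fd fc.
  move=> c; apply/ffunP => i; rewrite /fc /fd ffunE /=.
  by case: unliftP => [j ->|->]; rewrite ?ffunE.
rewrite (reindex fc); last by exists fd => ? _.
rewrite -(pair_bigA _ (fun x c' => \prod_(j < n.+1) h j (G (fc (x, c')) j))) /=.
rewrite exchange_big /=.
pose G' (c' : {ffun 'I_n -> F}) (j : 'I_n) := G (fc (0, c')) (lift ord0 j).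
have fcS x c' j : fc (x, c') (lift ord0 j) = c' j by rewrite ffunE liftK.
have fc0 x c' : fc (x, c') ord0 = x by rewrite ffunE unlift_none.
have agree x y c' (j i : 'I_n.+1) : (j < i)%N -> fc (x, c') i = fc (y, c') i.
  case: (unliftP ord0 i) => [i' ->|->]; first by rewrite !fcS.
  by rewrite ltn0.
have step c' : \sum_(x : F) \prod_(j < n.+1) h j (G (fc (x, c')) j) =
    s 0%N * \prod_(j < n) h j.+1 (G' c' j).
  rewrite (eq_bigr (fun x => h 0%N (x%:P + (G (fc (0, c')) ord0)) *
                     \prod_(j < n) h j.+1 (G' c' j))).
    by rewrite -mulr_suml Hs.
  move=> x _; rewrite big_ord_recl; congr (_ * _).
    congr (h _ _).
    have := HG (fc (x, c')) (fc (0, c')) ord0 (fun i hi => agree x 0 c' ord0 i hi).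
    rewrite !fc0 polyC0 subr0 => /eqP; rewrite subr_eq => /eqP ->.
    by rewrite addrC.
  apply: eq_bigr => j _; rewrite /G'.
  have := HG (fc (x, c')) (fc (0, c')) (lift ord0 j)
     (fun i hi => agree x 0 c' (lift ord0 j) i hi).
  by rewrite !fcS => /addIr ->.
rewrite (eq_bigr _ (fun c' _ => step c')) -mulr_sumr.
rewrite (IH (fun j => h j.+1) (fun j => s j.+1) G') ?big_ord_recl //.
move=> c c2 j hj; rewrite /G'.
have := HG (fc (0, c)) (fc (0, c2)) (lift ord0 j).
rewrite !fcS; apply => i; case: (unliftP ord0 i) => [i' ->|->] //.
by rewrite !fcS lift0 ltnS => /hj.
Qed.

Lemma q_gt0 : (0 < q)%N. Proof. exact: ltnW q_gt1. Qed.

Lemma qdigitE j i : qdigit F j i = ((j %/ q ^ i) %% q)%N.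
Proof. by []. Qed.

Lemma qdigit_lt j i : (qdigit F j i < q)%N.
Proof. by rewrite qdigitE ltn_pmod // q_gt0. Qed.

Lemma qdigit_small j i : (j < q ^ i)%N -> qdigit F j i = 0%N.
Proof. by move=> h; rewrite qdigitE divn_small ?mod0n. Qed.

Lemma qdigitS j i : qdigit F j i.+1 = qdigit F (j %/ q) i.
Proof. by rewrite !qdigitE expnS divnMA. Qed.

Lemma qdigitD j a i : qdigit F j (a + i) = qdigit F (j %/ q ^ a) i.
Proof. by rewrite !qdigitE expnD divnMA. Qed.

Lemma qdigit0 j : qdigit F j 0 = (j %% q)%N.
Proof. by rewrite qdigitE expn0 divn1. Qed.

Lemma prod_s n k l : (k < q ^ n)%N -> (l < q ^ n)%N ->
  \prod_(j < n) (if (qdigit F k j + qdigit F l j == q.-1)%N then -1 else 0 : {poly F})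
  = if (k + l == q ^ n - 1)%N then (-1) ^+ n else 0.
Proof.
elim: n k l => [|n IH] k l hk hl.
  rewrite big_ord0; move: hk hl; rewrite expn0 !ltnS !leqn0 => /eqP -> /eqP ->.
  by rewrite expr0.
rewrite big_ord_recl.
rewrite (eq_bigr (fun j : 'I_n => if (qdigit F (k %/ q) j + qdigit F (l %/ q) j == q.-1)%N then -1 else 0 : {poly F})); last first.
  by move=> j _; rewrite lift0 !qdigitS.
have hk' : (k %/ q < q ^ n)%N by rewrite ltn_divLR ?q_gt0 // -expnSr.
have hl' : (l %/ q < q ^ n)%N by rewrite ltn_divLR ?q_gt0 // -expnSr.
rewrite IH // !qdigit0.
rewrite {3}(divn_eq k q) {3}(divn_eq l q) expnS arith ?ltn_pmod ?q_gt0 ?q_gt1 //.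
case: eqP => _; case: eqP => _ /=; rewrite ?mul0r ?mulr0 //.
by rewrite exprS.
Qed.

Lemma hasseXn j i : hasse j ('X^i : {poly F}) = 'X^(i - j) *+ 'C(i, j).
Proof. by rewrite /hasse nderivnXn. Qed.

Lemma hasse_split (p0 : {poly F}) n (d : {ffun 'I_n -> F}) (j : 'I_n) :
  hasse j (p0 + polyOf d) - (d j)%:P =
  hasse j p0 + \sum_(i < n | i != j) d i *: hasse j 'X^i.
Proof.
rewrite /hasse /polyOf nderivnD linear_sum (bigD1 j) //= nderivnZ nderivnXn subnn binn.
rewrite expr0 mulr1n alg_polyC.
have -> : forall a b c : {poly F}, a + (b + c) - b = a + c by move=> a b c; ring.
congr (_ + _).
by apply: eq_bigr => i _; exact: nderivnZ.
Qed.

Lemma hasse_dep (p0 : {poly F}) n (c c' : {ffun 'I_n -> F}) (j : 'I_n) :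
  (forall i : 'I_n, (j < i)%N -> c i = c' i) ->
  hasse j (p0 + polyOf c) - (c j)%:P = hasse j (p0 + polyOf c') - (c' j)%:P.
Proof.
move=> H; rewrite !hasse_split; congr (_ + _); apply: eq_bigr => i ij.
case: (ltnP j i) => hji; first by rewrite H.
rewrite hasseXn bin_small ?mulr0n ?scaler0 //.
by rewrite ltn_neqAle hji andbT.
Qed.

Lemma hasse_high n (c : {ffun 'I_n -> F}) i : hasse (n + i) (polyOf c) = 0.
Proof.
rewrite /hasse /polyOf linear_sum big1 // => j _.
by rewrite linearZ /= nderivnXn bin_small ?mulr0n ?scaler0 // ltn_addr.
Qed.

Lemma Dj_widen j (x : {poly F}) N : (j < N)%N ->
  Dj j x = \prod_(i < N) hasse i x ^+ qdigit F j i.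
Proof.
move=> hN; rewrite /Dj (big_ord_widen _ (fun i => hasse i x ^+ qdigit F j i) hN).
rewrite big_mkcond /=; apply: eq_bigr => i _; case: ifP => // /negbT.
rewrite -leqNgt => hi.
rewrite qdigit_small ?expr0 //.
apply: (leq_trans (ltn_expl _ q_gt1)); rewrite leq_pexp2l ?q_gt0 //.
exact: ltnW.
Qed.

Lemma D'j_widen j (x : {poly F}) N : (j < N)%N ->
  D'j j x = \prod_(i < N) (if qdigit F j i == q.-1 then hasse i x ^+ q.-1 - 1
                           else hasse i x ^+ qdigit F j i).
Proof.
move=> hN; rewrite /D'j (big_ord_widen _ (fun i => if qdigit F j i == q.-1 then hasse i x ^+ q.-1 - 1
                           else hasse i x ^+ qdigit F j i) hN).
rewrite big_mkcond /=; apply: eq_bigr => i _; case: ifP => // /negbT.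
rewrite -leqNgt => hi.
have -> : qdigit F j i = 0%N.
  apply: qdigit_small.
  apply: (leq_trans (ltn_expl _ q_gt1)); rewrite leq_pexp2l ?q_gt0 //.
  exact: ltnW.
have q1 := q1_gt0.
by case: eqP => [h|_]; [rewrite -h in q1 | rewrite expr0].
Qed.

Lemma term_prod k l (x : {poly F}) N : (k < N)%N -> (l < N)%N ->
  Dj k x * D'j l x = \prod_(i < N) hfun (qdigit F k i) (qdigit F l i) (hasse i x).
Proof.
move=> hk hl; rewrite (Dj_widen _ hk) (D'j_widen _ hl) -big_split /=.
by apply: eq_bigr.
Qed.

Lemma main_lt (p0 : {poly F}) n l k : (l < q ^ n)%N -> (k < q ^ n)%N ->
  \sum_(c : {ffun 'I_n -> F}) Dj k (p0 + polyOf c) * D'j l (p0 + polyOf c)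
  = if (k + l == q ^ n - 1)%N then (-1) ^+ n else 0.
Proof.
move=> hl hk; rewrite -prod_s //.
rewrite (eq_bigr (fun c => \prod_(i < n) hfun (qdigit F k i) (qdigit F l i) (hasse i (p0 + polyOf c)))).
  apply: (iter_sum (h := fun j => hfun (qdigit F k j) (qdigit F l j))
                   (s := fun j => if (qdigit F k j + qdigit F l j == q.-1)%N then -1 else 0)
                   (G := fun c j => hasse j (p0 + polyOf c))).
    by move=> j r; apply: hfun_sum; apply: qdigit_lt.
  exact: hasse_dep.
move=> c _; rewrite (@term_prod k l (p0 + polyOf c) (n + (k + l).+1)%N); last 2 first.
- lia.
- lia.
rewrite big_split_ord /= [X in _ * X]big1 ?mulr1 // => i _.
have hq : (q ^ n <= q ^ (n + i))%N by rewrite leq_pexp2l ?q_gt0 ?leq_addr.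
rewrite !qdigit_small ?(leq_trans _ hq) // /hfun.
have q1 := q1_gt0.
case: eqP => [h|_]; first by rewrite -h in q1.
exact: mulr1.
Qed.

Lemma digits_zero M x : (x < q ^ M)%N -> (forall i, (i < M)%N -> qdigit F x i = 0%N) -> x = 0%N.
Proof.
elim: M x => [|M IH] x hx H.
  by move: hx; rewrite expn0 ltnS leqn0 => /eqP.
have h0 : (x %% q = 0)%N by rewrite -qdigit0 H.
have h1 : (x %/ q = 0)%N.
  apply: IH; first by rewrite ltn_divLR ?q_gt0 // -expnSr.
  by move=> i hi; rewrite -qdigitS H.
by rewrite (divn_eq x q) h0 h1.
Qed.

Lemma main_ge n l k : (l < q ^ n)%N -> (q ^ n <= k)%N ->
  \sum_(c : {ffun 'I_n -> F}) Dj k (polyOf c) * D'j l (polyOf c)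
  = if (k + l == q ^ n - 1)%N then (-1) ^+ n else 0.
Proof.
move=> hl hk.
have -> : (k + l == q ^ n - 1)%N = false by apply/eqP; lia.
set M := (k + l).+1.
set k' := (k %/ q ^ n)%N.
have hk' : (0 < k')%N by rewrite divn_gt0 // expn_gt0 q_gt0.
have /existsP [i hi] : [exists i : 'I_M, qdigit F k' i != 0%N].
  apply: contraT; rewrite negb_exists => /forallP H.
  have : k' = 0%N.
    apply: (@digits_zero M).
      apply: (leq_ltn_trans (leq_div _ _)).
      apply: (leq_trans (ltn_expl _ q_gt1)); rewrite leq_pexp2l ?q_gt0 //; lia.
    by move=> j hj; have := H (Ordinal hj); rewrite negbK => /eqP.
  by move=> e; rewrite e in hk'.
apply: big1 => c _.
rewrite (@term_prod k l (polyOf c) (n + M)%N); last 2 first.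
- rewrite /M; lia.
- rewrite /M; lia.
rewrite big_split_ord /= [X in _ * X](bigD1 i) //= /hfun hasse_high qdigitD -/k'.
by rewrite expr0n (negbTE hi) !mul0r mulr0.
Qed.

Lemma part1 n l k : (l < q ^ n)%N ->
  \sum_(c : {ffun 'I_n -> F}) Dj k (polyOf c) * D'j l (polyOf c)
  = if (k + l == q ^ n - 1)%N then (-1) ^+ n else 0.
Proof.
move=> hl; case: (ltnP k (q ^ n)) => hk; last exact: main_ge.
rewrite -(main_lt 0 hl hk); apply: eq_bigr => c _; by rewrite add0r.
Qed.

Lemma part2 n l k : (l < q ^ n)%N -> (k < q ^ n)%N ->
  \sum_(c : {ffun 'I_n -> F}) Dj k ('X^n + polyOf c) * D'j l ('X^n + polyOf c)
  = if (k + l == q ^ n - 1)%N then (-1) ^+ n else 0.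
Proof. exact: main_lt. Qed.

End Aux.

Unset Implicit Arguments.
Set Strict Implicit.

Theorem theorem9 (F : finFieldType) :
  (forall (n l k : nat), (l < #|F| ^ n)%N ->
     \sum_(c : {ffun 'I_n -> F}) Dj k (polyOf c) * D'j l (polyOf c)
     = (if (k + l == #|F| ^ n - 1)%N then (-1) ^+ n else 0 : {poly F}))
  /\
  (forall (n l k : nat), (l < #|F| ^ n)%N -> (k < #|F| ^ n)%N ->
     \sum_(c : {ffun 'I_n -> F}) Dj k ('X^n + polyOf c) * D'j l ('X^n + polyOf c)
     = (if (k + l == #|F| ^ n - 1)%N then (-1) ^+ n else 0 : {poly F})).
Proof.
split; [exact: (@part1 F) | exact: (@part2 F)].
Qed.
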